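(* Let $S$ be a $\mathcal{C}$-semigroup. Then $\mathrm{SG}(S)=\max_{\le_S}\mathrm{FG}(S)$, the set of maximal elements of $\mathrm{FG}(S)$ with respect to $\le_S$.
   Context: An integer cone $\mathcal{C}\subseteq\mathbb{N}^p$ is the set of integer points of a finitely generated rational cone in $\mathbb{Q}_{\ge0}^p$. A $\mathcal{C}$-semigroup is a subset $S\subseteq\mathcal{C}$ containing $0$, closed under addition, with $\mathcal{C}\setminus S$ finite; $\mathcal{H}(S)=\mathcal{C}\setminus S$. $\mathbf x\le_S\mathbf y$ means $\mathbf y-\mathbf x\in S$. $\mathrm{PF}(S)=\{\mathbf x\in\mathcal{H}(S)\mid\mathbf x+(S\setminus\{0\})\subseteq S\}$, $\mathrm{SG}(S)=\{\mathbf x\in\mathrm{PF}(S)\mid 2\mathbf x\in S\}$, and $\mathrm{FG}(S)=\{\mathbf x\in\mathcal{H}(S)\mid 2\mathbf x\in S,\ 3\mathbf x\in S\}$. *)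

(* Defs.v *)
From mathcomp Require Import all_boot all_order all_algebra.
Set Implicit Arguments. Unset Strict Implicit. Unset Printing Implicit Defensive.
Import Order.TTheory GRing.Theory Num.Theory.
Local Open Scope ring_scope.

Definition vecZ (p : nat) := 'rV[int]_p.

(* C is the set of integer points of the cone in Q^p generated by finitely many
   rational vectors g_0..g_(k-1) with nonnegative entries (a rational cone in Q_{>=0}^p). *)
Definition is_integer_cone (p : nat) (C : vecZ p -> Prop) : Prop :=
  exists (k : nat) (g : 'I_k -> 'rV[rat]_p),
    (forall i j, 0 <= g i 0 j) /\
    forall x : vecZ p,
      C x <-> exists lam : 'I_k -> rat,
                (forall i, 0 <= lam i) /\
                map_mx (fun z : int => z%:~R : rat) x = \sum_(i < k) lam i *: g i.

Definition finite_set (T : eqType) (A : T -> Prop) : Prop :=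
  exists s : seq T, forall x, A x <-> x \in s.

Definition holes (p : nat) (C S : vecZ p -> Prop) (x : vecZ p) : Prop :=
  C x /\ ~ S x.

Definition is_C_semigroup (p : nat) (C S : vecZ p -> Prop) : Prop :=
  [/\ (forall x, S x -> C x),
      S 0,
      (forall x y, S x -> S y -> S (x + y)) &
      finite_set (holes C S)].

Definition leS (p : nat) (S : vecZ p -> Prop) (x y : vecZ p) : Prop := S (y - x).

Definition PF (p : nat) (C S : vecZ p -> Prop) (x : vecZ p) : Prop :=
  holes C S x /\ forall s, S s -> s <> 0 -> S (x + s).

Definition SG (p : nat) (C S : vecZ p -> Prop) (x : vecZ p) : Prop :=
  PF C S x /\ S (x *+ 2).

Definition FG (p : nat) (C S : vecZ p -> Prop) (x : vecZ p) : Prop :=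
  holes C S x /\ S (x *+ 2) /\ S (x *+ 3).

Definition maximalS (p : nat) (S A : vecZ p -> Prop) (x : vecZ p) : Prop :=
  A x /\ forall y, A y -> leS S x y -> y = x.

(* Main.v *)
Require Import Defs.
From mathcomp Require Import all_boot all_order all_algebra.
From mathcomp Require Import zify.
From Stdlib Require Import Classical.
Set Implicit Arguments. Unset Strict Implicit. Unset Printing Implicit Defensive.
Import Order.TTheory GRing.Theory Num.Theory.
Local Open Scope ring_scope.

Lemma cone_add (p : nat) (C : vecZ p -> Prop) :
  is_integer_cone C -> forall x y, C x -> C y -> C (x + y).
Proof.
move=> [k [g [_ HC]]] x y /HC [l1 [H1 E1]] /HC [l2 [H2 E2]].
apply/HC; exists (fun i => l1 i + l2 i); split.
  by move=> i; apply: addr_ge0.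
have -> : map_mx (fun z : int => z%:~R : rat) (x + y) =
  map_mx (fun z : int => z%:~R : rat) x + map_mx (fun z : int => z%:~R : rat) y.
  by apply/matrixP => i j; rewrite !mxE intrD.
rewrite E1 E2 -big_split /=; apply: eq_bigr => i _; by rewrite scalerDl.
Qed.

Lemma twice0 (p : nat) (x : vecZ p) : x *+ 2 = 0 -> x = 0.
Proof.
rewrite mulr2n => /matrixP H; apply/matrixP => i j.
have := H i j; rewrite !mxE => /eqP; rewrite -mulr2n mulrn_eq0 /= => /eqP ->; rewrite ?mxE ?flatmx0 /=.
reflexivity.
Qed.

Theorem mainTheorem16 (p : nat) (C S : vecZ p -> Prop) :
  is_integer_cone C -> is_C_semigroup C S ->
  forall x : vecZ p, SG C S x <-> maximalS S (FG C S) x.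
Proof.
move=> HC [SC S0 SD _] x; split.
- move=> [[[Cx nSx] Hpf] S2].
  have S3 : S (x *+ 3).
    rewrite mulrS; apply: Hpf S2 _ => /twice0 x0; apply: nSx; by rewrite x0.
  split; first by split; [split|split].
  move=> y [[Cy nSy] _] Hle.
  apply: NNPP => neq; apply: nSy.
  have -> : y = x + (y - x) by rewrite addrC subrK.
  apply: Hpf Hle _ => /eqP; rewrite subr_eq0 => /eqP; by auto.
- move=> [[[Cx nSx] [S2 S3]] Hmax].
  split=> //; split; first by split.
  move=> s Ss s0; apply: NNPP => nSxs.
  have Fxs : FG C S (x + s).
    split; first by split=> //; apply: cone_add => //; exact: SC.
    split.
      rewrite mulrnDl; apply: (SD) => //; rewrite mulr2n; exact: (SD).
    rewrite mulrnDl; apply: (SD) => //; rewrite mulrS mulr2n; apply: (SD) => //; exact: (SD).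
  have := Hmax _ Fxs; rewrite /leS (addrC x s) addrK => /(_ Ss) => E.
  apply: s0; apply: (addrI x); by rewrite addr0 addrC.
Qed.
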